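(* Let $\varphi,\psi\in G$ satisfy $\lim_{t\to 0+}\psi(t)/\varphi(t)=0$, and let $F$ be a symmetric space on $[0,1]$ whose fundamental function is $\psi$. Then $\Lambda(\varphi)\subset F$ and the identity inclusion operator $I:\Lambda(\varphi)\to F$ is disjointly strictly singular.
   Context: All functions are Lebesgue measurable on $[0,1]$, $\mu$ is Lebesgue measure, and $x^*$ denotes the decreasing left-continuous rearrangement of $|x|$. A symmetric space (SS) on $[0,1]$ is a Banach space $E$ of measurable functions on $[0,1]$ such that: (1) if $y\in E$ and $|x(t)|\le |y(t)|$ then $x\in E$ and $\|x\|\le\|y\|$; (2) if $y\in E$ and $x,y$ are equimeasurable (i.e. $\mu\{|x|>\tau\}=\mu\{|y|>\tau\}$ for all $\tau>0$) then $x\in E$ and $\|x\|=\|y\|$. The fundamental function of $E$ is $f_E(t)=\|\chi_{(0,t)}\|_E$. $G$ denotes the class of all positive increasing concave functions on $(0,1]$. For $\varphi\in G$, the Lorentz space $\Lambda(\varphi)$ consists of all measurable $x$ with $\|x\|_{\Lambda(\varphi)}=\int_0^1 x^*(s)\,d\varphi(s)<\infty$. A bounded linear operator $T$ from a Banach lattice $X$ into a Banach space $Y$ is disjointly strictly singular (DSS) if there is no sequence of nonzero pairwise disjoint elements $x_n\in X$ such that the restriction of $T$ to their closed linear span $[x_n]$ is an isomorphism (onto its image). *)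

(* Defs.v *)
(* Functions on [0,1] are modelled as R -> R
   (values outside [0,1] are irrelevant), Lebesgue measure is mathcomp's
   lebesgue_measure on the Borel sets of R. *)
From HB Require Import structures.
From mathcomp Require Import all_boot all_order all_algebra.
From mathcomp Require Import all_classical all_reals all_analysis.
Set Implicit Arguments. Unset Strict Implicit. Unset Printing Implicit Defensive.
Import Order.TTheory GRing.Theory Num.Theory.
Import numFieldNormedType.Exports.
Local Open Scope classical_set_scope.
Local Open Scope ring_scope.

Section Defs.
Variable R : realType.
Local Notation mu := (@lebesgue_measure R).

Definition I01 : set R := `[0%R, 1%R].
Definition I01oc : set R := `]0%R, 1%R].

Definition meas01 (x : R -> R) : Prop := measurable_fun I01 x.

Definition distrib (x : R -> R) (tau : R) : \bar R :=
  mu ([set t | I01 t /\ (tau < `|x t|)%R]).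

(* decreasing left-continuous rearrangement x^* of |x|:
   x^*(s) = inf { tau >= 0 : mu{|x| > tau} < s }  for s > 0, and
   x^*(0) = inf { tau >= 0 : mu{|x| > tau} = 0 } = ess sup |x| = x^*(0+). *)
Definition xstar (x : R -> R) (s : R) : \bar R :=
  ereal_inf [set (tau%:E)%E | tau in
    [set tau : R | (0 <= tau)%R /\ ((distrib x tau < s%:E)%E \/ distrib x tau = 0%E)]].

Definition ae_zero01 (x : R -> R) : Prop :=
  mu ([set t | I01 t /\ x t != 0]) = 0%E.

Definition ae_le01 (x y : R -> R) : Prop :=
  mu ([set t | I01 t /\ (`|y t| < `|x t|)%R]) = 0%E.

Definition equimeasurable (x y : R -> R) : Prop :=
  forall tau : R, (0 < tau)%R -> distrib x tau = distrib y tau.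

Definition symmetric_space (E : set (R -> R)) (N : (R -> R) -> R) : Prop :=
  (forall x, E x -> meas01 x) /\
  [/\
      E (fun _ => 0%R)
      /\ (forall x y, E x -> E y -> E (fun t => x t + y t))
      /\ (forall (a : R) x, E x -> E (fun t => a * x t)),
      (forall x, E x -> 0 <= N x)
      /\ (forall x, E x -> (N x = 0 <-> ae_zero01 x))
      /\ (forall x y, E x -> E y -> N (fun t => x t + y t) <= N x + N y)
      /\ (forall (a : R) x, E x -> N (fun t => a * x t) = `|a| * N x),
      (forall u : nat -> R -> R, (forall n, E (u n)) ->
         (forall e : R, 0 < e -> exists n0 : nat, forall n m : nat,
            (n0 <= n)%N -> (n0 <= m)%N -> N (fun t => u n t - u m t) < e) ->
         exists x, E x /\ forall e : R, 0 < e -> exists n0 : nat, forall n : nat,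
            (n0 <= n)%N -> N (fun t => u n t - x t) < e),
      (forall x y, E y -> meas01 x -> ae_le01 x y -> E x /\ N x <= N y) &
      (forall x y, E y -> meas01 x -> equimeasurable x y -> E x /\ N x = N y)].

Definition classG (phi : R -> R) : Prop :=
  [/\ (forall t, I01oc t -> 0 < phi t),
      (forall s t, I01oc s -> I01oc t -> s <= t -> phi s <= phi t) &
      (forall s t l, I01oc s -> I01oc t -> 0 <= l -> l <= 1 ->
         l * phi s + (1 - l) * phi t <= phi (l * s + (1 - l) * t))].

(* dphi is the Lebesgue-Stieltjes measure d(phi) on [0,1] (with phi(0) := 0,
   so that a possible jump phi(0+) is a point mass at 0):
   dphi [0,b] = phi b for all b in (0,1].  This determines dphi on the Borel
   subsets of [0,1]. *)
Definition stieltjes_of (phi : R -> R)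
    (dphi : {measure set (measurableTypeR R) -> \bar R}) : Prop :=
  forall b, I01oc b -> dphi `[0%R, b]%classic = (phi b)%:E.

Definition lorentz_norm (dphi : {measure set (measurableTypeR R) -> \bar R})
    (x : R -> R) : \bar R :=
  (\int[dphi]_(s in I01) xstar x s)%E.

Definition in_lorentz dphi (x : R -> R) : Prop :=
  meas01 x /\ (lorentz_norm dphi x < +oo)%E.

Definition disjoint01 (x y : R -> R) : Prop :=
  mu ([set t | I01 t /\ x t != 0 /\ y t != 0]) = 0%E.

Definition lin_span (xs : nat -> R -> R) : set (R -> R) :=
  [set y | exists (k : nat) (a : nat -> R),
     y = fun t => \sum_(i < k) a i * xs i t].

Definition closed_span_lorentz dphi (xs : nat -> R -> R) : set (R -> R) :=
  [set x | in_lorentz dphi x /\ forall e : R, 0 < e -> exists y, lin_span xs y /\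
     (lorentz_norm dphi (fun t => (x t - y t)%R) < e%:E)%E].

(* The inclusion I : Lambda(phi) -> F (assumed to land in F) is DSS:
   no sequence of nonzero pairwise disjoint x_n in Lambda(phi) on whose closed
   linear span I is an isomorphism onto its image (i.e. bounded below). *)
Definition inclusion_DSS dphi (N : (R -> R) -> R) : Prop :=
  ~ exists xs : nat -> R -> R,
      [/\ (forall n, in_lorentz dphi (xs n)),
          (forall n, ~ ae_zero01 (xs n)),
          (forall n m, n <> m -> disjoint01 (xs n) (xs m)) &
          exists c : R, 0 < c /\ forall x, closed_span_lorentz dphi xs x ->
             ((c%:E * lorentz_norm dphi x)%E <= (N x)%:E)%E].

End Defs.

(* Main.v *)
Require Import Defs.
From HB Require Import structures.
From mathcomp Require Import all_boot all_order all_algebra.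
From mathcomp Require Import all_classical all_reals all_analysis.
Import Order.TTheory GRing.Theory Num.Theory.
Import numFieldNormedType.Exports.
Local Open Scope classical_set_scope.
Local Open Scope ring_scope.

Lemma leb_mono {R : realType} [A B : set R] : A `<=` B -> (@lebesgue_measure R A <= @lebesgue_measure R B)%E.
Proof. move=> AB. rewrite /lebesgue_measure /lebesgue_stieltjes_measure /measure_extension /=.
apply: le_outer_measure. exact AB. Qed.
Lemma leb_sub {R : realType} [A : set R] [F : nat -> set R] : A `<=` \bigcup_n F n -> (@lebesgue_measure R A <= \sum_(0 <= n <oo) @lebesgue_measure R (F n))%E.
Proof. move=> AF. apply: (le_trans (leb_mono AF)).
rewrite /lebesgue_measure /lebesgue_stieltjes_measure /measure_extension /=.
exact: outer_measure_sigma_subadditive. Qed.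
Lemma leb_null {R : realType} [A : set R] [F : nat -> set R] : A `<=` \bigcup_n F n -> (forall n, @lebesgue_measure R (F n) = 0%E) -> @lebesgue_measure R A = 0%E.
Proof. move=> AF F0. apply/eqP; rewrite eq_le measure_ge0 andbT.
apply: (le_trans (leb_sub AF)). by rewrite eseries0. Qed.

Section Basic.
Variable R : realType.
Local Notation mu := (@lebesgue_measure R).
Implicit Types (x : R -> R) (tau : R).

Lemma mu_I01 : mu (I01 (R:=R)) = 1%:E.
Proof. by rewrite /I01 lebesgue_measure_itv /= lte_fin ltr01 sube0. Qed.

Definition Ab (x : R -> R) (tau : R) : set R := [set t | I01 t /\ (tau < `|x t|)%R].
Definition lev (x : R -> R) (tau : R) : R := fine (distrib x tau).

Lemma distrib_Ab x tau : distrib x tau = mu (Ab x tau).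
Proof. by []. Qed.

Lemma distrib_le1 x tau : (distrib x tau <= 1%:E)%E.
Proof. rewrite -mu_I01; apply: leb_mono => t [] //. Qed.

Lemma distribE x tau : distrib x tau = (lev x tau)%:E.
Proof.
rewrite /lev fineK // fin_numE; apply/andP; split.
  by rewrite gt_eqF // (lt_le_trans _ (measure_ge0 _ _)) ?ltNyr.
by rewrite lt_eqF // (le_lt_trans (distrib_le1 _ _)) ?ltry.
Qed.

Lemma lev_ge0 x tau : 0 <= lev x tau.
Proof. by rewrite -lee_fin -distribE measure_ge0. Qed.

Lemma lev_le1 x tau : lev x tau <= 1.
Proof. by rewrite -lee_fin -distribE distrib_le1. Qed.

Lemma lev_mono x s t : s <= t -> lev x t <= lev x s.
Proof.
move=> st; rewrite -lee_fin -!distribE; apply: leb_mono => u [Iu tu]; split => //.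
exact: le_lt_trans tu.
Qed.

Lemma Ab_meas x tau : meas01 x -> 0 <= tau -> measurable (Ab x tau).
Proof.
move=> mx t0.
have -> : Ab x tau = @I01 R `&` x @^-1` (`]tau, +oo[ `|` `]-oo, - tau[).
  apply/seteqP; split => u /=.
    move=> [Iu tu]; split => //; rewrite !in_itv /= andbT.
    case: (leP 0 (x u)) => xu0.
      by left; move: tu; rewrite ger0_norm.
    by right; move: tu; rewrite ltr0_norm // ltrNr.
  rewrite !in_itv /= andbT => -[Iu [tu|tu]]; split => //.
    by rewrite (lt_le_trans tu) // ler_norm.
  by rewrite -normrN (lt_le_trans _ (ler_norm _)) // ltrNr.
apply: mx => //; first by rewrite /I01; exact: measurable_itv.
apply: measurableU; exact: measurable_itv.
Qed.

Lemma distrib_indic (B : set R) tau : 0 < tau ->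
  distrib (\1_B) tau = if tau < 1 then mu (@I01 R `&` B) else 0%E.
Proof.
move=> t0; rewrite /distrib; case: ifPn => t1.
  congr (mu _); apply/seteqP; split => u /=.
    move=> [Iu]; rewrite indicE; case: (boolP (u \in B)) => [/set_mem uB|_] //.
    by rewrite normr0 ltNge (ltW t0).
  move=> [Iu Bu]; split => //; rewrite indicE mem_set // normr1 //.
have -> : [set t | I01 t /\ tau < `|(\1_B : R -> R) t|] = set0.
  apply/seteqP; split => u //= [Iu]; rewrite indicE.
  case: (u \in B); rewrite ?normr1 ?normr0 => h.
    by move: t1; rewrite h.
  by move: t0; rewrite ltNge (ltW h).
by rewrite measure0.
Qed.

End Basic.
Arguments Ab {R}.
Arguments lev {R}.

Definition pt {R : realType} (f : R -> R) (d : R) : R := if 0 < d then f d else 0.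

Section Space.
Variable R : realType.
Local Notation mu := (@lebesgue_measure R).
Implicit Types (x y z : R -> R) (tau : R).
Variables (E : set (R -> R)) (N : (R -> R) -> R) (psi : R -> R).
Hypothesis HS : symmetric_space E N.
Hypothesis Hfund : forall t, I01oc t -> E (\1_(`]0, t[%classic : set R) : R -> R) /\ N (\1_(`]0, t[%classic : set R)) = psi t.

Lemma Emeas [x] : E x -> meas01 x. Proof. by case: HS => h _; exact: h. Qed.
Lemma E0 : E (fun _ => 0). Proof. by case: HS => _ [[h _] _ _ _ _]. Qed.
Lemma Eadd [x y] : E x -> E y -> E (fun t => x t + y t). Proof. by case: HS => _ [[_ [h _]] _ _ _ _]; exact: h. Qed.
Lemma Escal (a : R) [x] : E x -> E (fun t => a * x t). Proof. by case: HS => _ [[_ [_ h]] _ _ _ _]; exact: h. Qed.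
Lemma Nge0 [x] : E x -> 0 <= N x. Proof. by case: HS => _ [_ [h _] _ _ _]; exact: h. Qed.
Lemma Nz [x] : E x -> (N x = 0 <-> ae_zero01 x). Proof. by case: HS => _ [_ [_ [h _]] _ _ _]; exact: h. Qed.
Lemma Ntri [x y] : E x -> E y -> N (fun t => x t + y t) <= N x + N y. Proof. by case: HS => _ [_ [_ [_ [h _]]] _ _ _]; exact: h. Qed.
Lemma Nscal (a : R) [x] : E x -> N (fun t => a * x t) = `|a| * N x. Proof. by case: HS => _ [_ [_ [_ [_ h]]] _ _ _]; exact: h. Qed.
Lemma Ecompl (u : nat -> R -> R) : (forall n, E (u n)) ->
         (forall e : R, 0 < e -> exists n0 : nat, forall n m : nat,
            (n0 <= n)%N -> (n0 <= m)%N -> N (fun t => u n t - u m t) < e) ->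
         exists x, E x /\ forall e : R, 0 < e -> exists n0 : nat, forall n : nat,
            (n0 <= n)%N -> N (fun t => u n t - x t) < e.
Proof. by case: HS => _ [_ _ h _ _]; exact: h. Qed.
Lemma Eideal [x y] : E y -> meas01 x -> ae_le01 x y -> E x /\ N x <= N y.
Proof. by case: HS => _ [_ _ _ h _]; exact: h. Qed.
Lemma Erearr [x y] : E y -> meas01 x -> equimeasurable x y -> E x /\ N x = N y.
Proof. by case: HS => _ [_ _ _ _ h]; exact: h. Qed.

Lemma N0 : N (fun _ => 0) = 0.
Proof.
have := Nscal 0 E0; rewrite normr0 [0 * N _]mul0r => h.
apply: eq_trans h; congr N; apply/funext => t; by rewrite mul0r.
Qed.

Lemma Eopp [x] : E x -> E (fun t => - x t).
Proof.
move=> Ex; have := Escal (-1) Ex; congr E; apply/funext => t; by rewrite mulN1r.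
Qed.

Lemma Nopp [x] : E x -> N (fun t => - x t) = N x.
Proof.
move=> Ex; have := Nscal (-1) Ex; rewrite normrN normr1 mul1r => <-.
by congr N; apply/funext => t; rewrite mulN1r.
Qed.

Lemma Esub [x y] : E x -> E y -> E (fun t => x t - y t).
Proof. by move=> Ex Ey; apply: Eadd => //; exact: Eopp. Qed.

Lemma Nsub_sym [x y] : E x -> E y -> N (fun t => x t - y t) = N (fun t => y t - x t).
Proof.
move=> Ex Ey; rewrite -(Nopp (Esub Ey Ex)); congr N; apply/funext => t.
by rewrite opprB.
Qed.

Lemma Ntri_sub [x y] : E x -> E y -> N y <= N x + N (fun t => x t - y t).
Proof.
move=> Ex Ey.
have -> : N y = N (fun t => x t + - (x t - y t)).
  by congr N; apply/funext => t; rewrite opprB addrC subrK.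
apply: (le_trans (Ntri Ex (Eopp (Esub Ex Ey)))).
by rewrite Nopp //; exact: Esub.
Qed.

Lemma Nind [x tau] : meas01 x -> 0 <= tau ->
  E (\1_(Ab x tau)) /\ N (\1_(Ab x tau)) <= pt psi (lev x tau).
Proof.
move=> mx t0.
have mi : meas01 (\1_(Ab x tau) : R -> R) by apply: measurable_realfun.measurable_indic; exact: Ab_meas.
rewrite /pt; case: ifPn => d0.
  have Id : I01oc (lev x tau) by rewrite /I01oc /= in_itv /= d0 lev_le1.
  have [Ei Ni] := Hfund _ Id.
  have eqm : equimeasurable (\1_(Ab x tau) : R -> R) (\1_(`]0, lev x tau[%classic : set R) : R -> R).
  move=> s s0; rewrite !distrib_indic //; case: ifPn => // _.
  have -> : @I01 R `&` Ab x tau = Ab x tau by apply/seteqP; split => u // [].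
  rewrite -distrib_Ab distribE.
  have -> : @I01 R `&` (`]0, lev x tau[%classic : set R) = `]0, lev x tau[%classic.
    apply/seteqP; split => u; first by case.
    move=> /[dup] uu; rewrite /= !in_itv /= => /andP[u0 ud]; split => //.
    by rewrite /I01 /= in_itv /= (ltW u0) (le_trans (ltW ud)) ?lev_le1.
  by rewrite lebesgue_measure_itv /= lte_fin d0 sube0.
  have [EE NN] := Erearr Ei mi eqm; split => //; by rewrite NN Ni.
have d00 : lev x tau = 0 by apply/eqP; rewrite eq_le lev_ge0 andbT leNgt.
have ael : ae_le01 (\1_(Ab x tau) : R -> R) (fun _ => 0).
apply/eqP; rewrite eq_le measure_ge0 andbT.
have <- : distrib x tau = 0%E by rewrite distribE d00.
apply: leb_mono => u [Iu]; rewrite normr0 indicE; case: (boolP (u \in _)) => [/set_mem //|].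
by rewrite normr0 ltxx.
have [EE NN] := Eideal E0 mi ael; split => //; by rewrite -N0.
Qed.


Lemma pt_psi_ge0 d : 0 <= d -> d <= 1 -> 0 <= pt psi d.
Proof.
move=> d0 d1; rewrite /pt; case: ifPn => // dp.
have Id : I01oc d by rewrite /I01oc /= in_itv /= dp d1.
have [Ei <-] := Hfund _ Id; exact: Nge0.
Qed.

Definition ys x h M := fun t => \sum_(j < M) h * (\1_(Ab x (j%:R * h)) : R -> R) t.
Definition aa x h j := h * pt psi (lev x (j%:R * h)).

Lemma aa_ge0 x h j : 0 <= h -> 0 <= aa x h j.
Proof. by move=> h0; rewrite /aa mulr_ge0 // pt_psi_ge0 // ?lev_ge0 ?lev_le1. Qed.

Lemma ysS x h M : ys x h M.+1 = fun t => ys x h M t + h * (\1_(Ab x (M%:R * h)) : R -> R) t.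
Proof. by apply/funext => t; rewrite /ys big_ord_recr. Qed.

Lemma ys0 x h : ys x h 0 = fun _ => 0.
Proof. by apply/funext => t; rewrite /ys big_ord0. Qed.

Lemma ys_E [x h] M : meas01 x -> 0 < h ->
  E (ys x h M) /\ N (ys x h M) <= \sum_(j < M) aa x h j.
Proof.
move=> mx h0; elim: M => [|M [IE IN]].
  by rewrite ys0 big_ord0 N0; split => //; exact: E0.
have [Ei Ni] := Nind mx (mulr_ge0 (ler0n _ M) (ltW h0)).
rewrite ysS big_ord_recr /=; split; first by apply: Eadd => //; exact: Escal.
apply: (le_trans (Ntri IE (Escal h Ei))); rewrite Nscal // gtr0_norm //.
by apply: lerD => //; rewrite /aa ler_pM2l.
Qed.

Lemma ys_diff x h m k : meas01 x -> 0 < h ->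
  N (fun t => ys x h (m + k) t - ys x h m t) <= \sum_(j < m + k) aa x h j - \sum_(j < m) aa x h j.
Proof.
move=> mx h0; elim: k => [|k IN].
  rewrite addn0 subrr; rewrite (_ : (fun t => _) = fun _ => 0) ?N0 //.
  by apply/funext => t; rewrite subrr.
have [Ei Ni] := Nind mx (mulr_ge0 (ler0n _ (m + k)) (ltW h0)).
have [Em _] := ys_E m mx h0; have [Emk _] := ys_E (m + k) mx h0.
rewrite addnS ysS big_ord_recr /=.
rewrite (_ : (fun t => _) = fun t => (ys x h (m + k) t - ys x h m t) + h * (\1_(Ab x ((m + k)%:R * h)) : R -> R) t); last first.
  by apply/funext => t; rewrite addrAC.
apply: (le_trans (Ntri (Esub Emk Em) (Escal h Ei))); rewrite Nscal // gtr0_norm //.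
rewrite addrAC; apply: lerD => //; by rewrite /aa ler_pM2l.
Qed.

Lemma ys_mono [x h m n] t : 0 <= h -> (m <= n)%N -> ys x h m t <= ys x h n t.
Proof.
move=> h0 /subnKC <-; elim: (n - m)%N => [|k IH]; first by rewrite addn0.
rewrite addnS ysS (le_trans IH) // lerDl mulr_ge0 // indicE; by case: (_ \in _).
Qed.

Lemma ys_ge [x h] M t : 0 < h -> I01 t -> Num.min `|x t| (M%:R * h) <= ys x h M t.
Proof.
move=> h0 It; elim: M => [|M IH].
  by rewrite mul0r ys0 ge_min lexx orbT.
rewrite ysS /=; case: (ltP (M%:R * h) `|x t|) => xM.
  have -> : (\1_(Ab x (M%:R * h)) : R -> R) t = 1 by rewrite indicE mem_set.
  move: IH; rewrite (min_r (ltW xM)) => IH.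
  by rewrite ge_min mulr1 -nat1r mulrDl mul1r [h + _]addrC lerD // orbT.
rewrite min_l; last by rewrite (le_trans xM) // ler_pM2r // ler_nat.
move: IH; rewrite min_l // => IH; apply: (le_trans IH); rewrite lerDl (mulr_ge0 (ltW h0)) // indicE.
Qed.

Lemma key x h B : meas01 x -> 0 < h ->
  (forall M, \sum_(j < M) aa x h j <= B) -> E x /\ N x <= B.
Proof.
move=> mx h0 HB.
pose P M := \sum_(j < M) aa x h j.
have Pmono m n : (m <= n)%N -> P m <= P n.
  move=> /subnKC <-; elim: (n - m)%N => [|k IH]; first by rewrite addn0.
  by rewrite addnS /P big_ord_recr /= (le_trans IH) // lerDl aa_ge0 // ltW.
have Nd m n : (m <= n)%N -> N (fun t => ys x h n t - ys x h m t) <= P n - P m.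
  by move=> /subnKC <-; exact: ys_diff.
have EY M : E (ys x h M) by have [] := ys_E M mx h0.
pose S := [set P n | n in [set: nat]].
have hS : has_sup S by split; [exists (P 0%N), 0%N | exists B => _ [n _ <-]; exact: HB].
have cauchy : forall e : R, 0 < e -> exists n0 : nat, forall n m : nat,
            (n0 <= n)%N -> (n0 <= m)%N -> N (fun t => ys x h n t - ys x h m t) < e.
  move=> e e0; have [_ [n0 _ <-] Hn0] := sup_adherent e0 hS.
  exists n0 => n m n0n n0m.
  have key2 : forall a b, (n0 <= a)%N -> (a <= b)%N -> N (fun t => ys x h b t - ys x h a t) < e.
    move=> a b n0a ab; apply: (le_lt_trans (Nd _ _ ab)).
    have Pb : P b <= sup S by apply: sup_upper_bound => //; exists b.
    have Pa : P n0 <= P a by exact: Pmono.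
    by move: Hn0; rewrite ltrBlDr -ltrBlDl => H; apply: le_lt_trans H; rewrite lerB.
  case: (leqP m n) => mn; first exact: key2.
  by rewrite Nsub_sym //; apply: key2 => //; exact: ltnW.
have [z [Ez conv]] := Ecompl (ys x h) EY cauchy.
have mz := Emeas Ez.
have claim1 M : mu [set t | I01 t /\ z t < ys x h M t] = 0%E.
  pose w := (ys x h M \- z) \max (cst 0).
  have mw : meas01 w.
    apply: measurable_realfun.measurable_maxr; last exact: measurable_cst.
    apply: measurable_realfun.measurable_funB => //; exact: Emeas.
  have Hw : forall e : R, 0 < e -> E w /\ N w < e.
    move=> e e0; have [n0 Hn0] := conv e e0.
    pose K := maxn n0 M.
    have EK : E (fun t => ys x h K t - z t) by exact: Esub.
    have ae : ae_le01 w (fun t => ys x h K t - z t).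
      apply/eqP; rewrite eq_le measure_ge0 andbT.
      rewrite (_ : [set t | _] = set0) ?measure0 //.
      apply/seteqP; split => t //= [It]; apply/negP; rewrite -leNgt.
      rewrite /w /=; case: (leP 0 (ys x h M t - z t)) => h1; last first.
        by rewrite normr0 normr_ge0.
      rewrite ger0_norm // (le_trans _ (ler_norm _)) // lerD2r ys_mono ?leq_maxr //.
      exact: ltW.
    have [Ew Nw] := Eideal EK mw ae; split => //.
    by apply: (le_lt_trans Nw); apply: Hn0; rewrite leq_maxl.
  have Ew : E w by have [] := Hw 1 ltr01.
  have Nw0 : N w = 0.
    apply/eqP; rewrite eq_le Nge0 // andbT; apply/ler_addgt0Pr => e e0.
    by rewrite add0r; have [_ /ltW] := Hw e e0.
  have /(Nz Ew) aez := Nw0.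
  apply/eqP; rewrite eq_le measure_ge0 andbT -aez; apply: leb_mono => t [It zt].
  split => //; rewrite /w /= max_l; first by rewrite subr_eq0 gt_eqF.
  by rewrite subr_ge0 ltW.
have ae : ae_le01 x z.
  apply: (leb_null (F := fun M => [set t | I01 t /\ z t < ys x h M t])) => //.
  move=> t [It zx]; exists (Num.trunc (`|x t| / h)).+1 => //; split => //.
  rewrite (le_lt_trans (ler_norm _)) // (lt_le_trans zx) //.
  apply: le_trans (ys_ge _ _ h0 It); rewrite le_min lexx /=.
  by rewrite -ler_pdivrMr // ltW // truncnS_gt.
have [Ex Nxz] := Eideal Ez mx ae; split => //.
apply: (le_trans Nxz); apply/ler_addgt0Pr => e e0.
have [n0 Hn0] := conv e e0.
apply: (le_trans (Ntri_sub (EY n0) Ez)); apply: lerD.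
  have [_ Hn] := ys_E n0 mx h0; exact: le_trans Hn (HB _).
by apply/ltW/Hn0.
Qed.

End Space.
Arguments aa {R}.
Arguments key {R E N psi} HS Hfund [x h B].

Section Lorentz.
Variable R : realType.
Implicit Types (x : R -> R) (tau s : R).

Lemma xstar_ge0 x s : (0 <= xstar x s)%E.
Proof. by apply/ereal_infP => _ [t [t0 _] <-]; rewrite lee_fin. Qed.

Lemma xstar_lb [x tau s] : 0 <= tau -> 0 < lev x tau -> s <= lev x tau -> (tau%:E <= xstar x s)%E.
Proof.
move=> t0 d0 sd; apply/ereal_infP => _ [sg [sg0 Hs] <-]; rewrite lee_fin.
case: (leP tau sg) => // st; exfalso.
have le1 : lev x tau <= lev x sg by apply: lev_mono; exact: ltW.
case: Hs; rewrite distribE.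
  by rewrite lte_fin => H; move: (lt_le_trans H (le_trans sd le1)); rewrite ltxx.
by move=> [] H; move: (lt_le_trans d0 le1); rewrite H ltxx.
Qed.

Lemma le_integral_nm (mu : {measure set (measurableTypeR R) -> \bar R}) (D : set R) (f1 f2 : R -> \bar R) :
  (forall t, D t -> (0 <= f1 t)%E) -> (forall t, D t -> (f1 t <= f2 t)%E) ->
  (\int[mu]_(t in D) f1 t <= \int[mu]_(t in D) f2 t)%E.
Proof.
move=> f10 f12.
have f20 : forall t, D t -> (0 <= f2 t)%E by move=> t Dt; exact: le_trans (f10 _ Dt) (f12 _ Dt).
rewrite !ge0_integralE //.
apply: ge_ereal_sup => _ [h Hh <-]; apply: ereal_sup_ubound; exists h => //= t.
apply: le_trans (Hh t) _; exact: lee_restrict.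
Qed.

Variables (phi : R -> R) (dphi : {measure set (measurableTypeR R) -> \bar R}).
Hypothesis Hst : stieltjes_of phi dphi.

Definition CC x h (j : nat) : set R :=
  if 0 < lev x (j.+1%:R * h) then `[0, lev x (j.+1%:R * h)]%classic else set0.

Lemma CC_meas x h j : measurable (CC x h j).
Proof. rewrite /CC; case: ifP => _ //; exact: measurable_itv. Qed.

Lemma int_CC x h j : 0 <= h ->
  (\int[dphi]_(s in @I01 R) (h * (\1_(CC x h j) : R -> R) s)%:E = (h * pt phi (lev x (j.+1%:R * h)))%:E)%E.
Proof.
move=> h0.
under eq_integral => s _ do rewrite EFinM.
have mI : measurable (@I01 R) by rewrite /I01; exact: measurable_itv.
rewrite ge0_integralZl_EFin //; last first.
  apply/measurable_realfun.measurable_EFinP; apply: measurable_realfun.measurable_indic; exact: CC_meas.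
rewrite integral_indic //; last exact: CC_meas.
rewrite /CC /pt; case: ifPn => d0; last by rewrite set0I measure0 mule0 mulr0.
rewrite EFinM; congr (_ * _)%E.
rewrite setIidl; last first.
  move=> u; rewrite /= !in_itv /= => /andP[u0 ud].
  by rewrite /I01 /= in_itv /= u0 (le_trans ud) ?lev_le1.
by apply: Hst; rewrite /I01oc /= in_itv /= d0 lev_le1.
Qed.

Lemma CC_pw x h M s : 0 < h -> I01 s ->
  ((\sum_(j < M) h * (\1_(CC x h j) : R -> R) s)%:E <= xstar x s)%E.
Proof.
move=> h0 Is; elim: M => [|M IH]; first by rewrite big_ord0 xstar_ge0.
rewrite big_ord_recr /=; case: (boolP (s \in CC x h M)) => sC; last first.
  by rewrite indicE (negbTE sC) mulr0 addr0.
move: (sC); rewrite /CC; case: ifPn => d0; last by rewrite inE.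
rewrite inE /= in_itv /= => /andP[s0 sd].
apply: le_trans (xstar_lb (mulr_ge0 (ler0n _ _) (ltW h0)) d0 sd).
rewrite lee_fin.
apply: (le_trans (y := M%:R * h + h)); last by rewrite -addn1 natrD mulrDl mul1r.
apply: lerD; last by rewrite indicE; case: (_ \in _); rewrite ?mulr1 ?mulr0 // ltW.
apply: (le_trans (y := \sum_(j < M) h)); last by rewrite sumr_const card_ord mulr_natl.
apply: ler_sum => j _; rewrite indicE; case: (_ \in _); rewrite ?mulr1 ?mulr0 //.
exact: ltW.
Qed.

Lemma lorentz_lb x h M : 0 < h ->
  ((\sum_(j < M) h * pt phi (lev x (j.+1%:R * h)))%:E <= lorentz_norm dphi x)%E.
Proof.
move=> h0.
have mI : measurable (@I01 R) by rewrite /I01; exact: measurable_itv.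
have -> : (\sum_(j < M) h * pt phi (lev x (j.+1%:R * h)))%:E =
   (\int[dphi]_(s in @I01 R) (\sum_(j < M) (h * (\1_(CC x h j) : R -> R) s)%:E))%E.
  rewrite ge0_integral_sum //; last 2 first.
  - move=> j; apply/measurable_realfun.measurable_EFinP.
    apply: measurable_realfun.measurable_funM; first exact: measurable_cst.
    apply: measurable_realfun.measurable_indic; exact: CC_meas.
  - by move=> j t _; rewrite lee_fin (mulr_ge0 (ltW h0)) // indicE; case: (_ \in _).
  by rewrite -sumEFin; apply: eq_bigr => j _; rewrite int_CC // ltW.
rewrite /lorentz_norm; apply: le_integral_nm.
  by move=> t _; apply: sume_ge0 => j _; rewrite lee_fin (mulr_ge0 (ltW h0)) // indicE; case: (_ \in _).
by move=> t It; rewrite sumEFin; exact: CC_pw.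
Qed.

End Lorentz.
Arguments lorentz_lb {R phi dphi} Hst x h M.

Lemma near_right0 (R : realType) (f : R -> R) : f @ 0^'+ --> 0 ->
  forall e : R, 0 < e -> exists2 d : R, 0 < d & forall t, 0 < t < d -> `|f t| < e.
Proof.
move=> hf e e0.
have := cvgr_dist_lt _ _ hf _ e0.
move=> [d /= d0 Hd].
exists d => // t /andP[t0 td].
have := Hd t. rewrite /ball /= sub0r normrN ger0_norm ?ltW // => /(_ td t0).
by rewrite sub0r normrN.
Qed.

Lemma lorentz0 (R : realType) (dphi : {measure set (measurableTypeR R) -> \bar R}) :
  lorentz_norm dphi (fun _ => 0) = 0%E.
Proof.
have xs0 : forall s : R, xstar (fun _ => 0) s = 0%E.
  move=> s; apply/eqP; rewrite eq_le xstar_ge0 andbT.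
  apply: ereal_inf_lbound; exists 0 => //; split => //; right.
  rewrite distrib_Ab (_ : Ab _ 0 = set0) ?measure0 //.
  by apply/seteqP; split => t // [_]; rewrite normr0 ltxx.
rewrite /lorentz_norm (eq_integral (fun _ => 0%E)); first exact: integral0.
by move=> s _; rewrite xs0.
Qed.

Lemma supp_small (R : realType) (xs : nat -> R -> R) (delta : R) :
  (forall n, meas01 (xs n)) -> (forall n m, n <> m -> disjoint01 (xs n) (xs m)) ->
  0 < delta -> exists n, lev (xs n) 0 < delta.
Proof.
move=> mxs dis d0; apply: contrapT => /forallNP H.
have Hd n : delta <= lev (xs n) 0 by rewrite leNgt; apply/negP => /(H n).
pose S n := Ab (xs n) 0.
have mS n : measurable (S n) by apply: Ab_meas.
pose U K := \bigcup_(n in `I_K) S n.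
have mU K : measurable (U K) by apply: bigcup_measurable => n _; exact: mS.
have claim K : ((K%:R * delta)%:E <= lebesgue_measure (U K))%E.
  elim: K => [|K IH].
    by rewrite mul0r measure_ge0.
  have UE : U K.+1 = U K `|` (S K `\` U K).
    apply/seteqP; split => t.
      move=> [n /= nK Snt]; case: (boolP (t \in U K)) => [/set_mem|]; first by left.
      move=> /negP tU; right; split => //; last by move=> h; apply: tU; apply/mem_set.
      have : (n = K)%N.
        apply/eqP; rewrite eqn_leq -ltnS nK /=; rewrite leqNgt; apply/negP => nK'.
        by apply: tU; apply/mem_set; exists n.
      by move=> <-.
    move=> [[n /= nK Snt]|[SKt _]]; first by exists n => //=; exact: ltnW.
    by exists K => //=.
  have nul : lebesgue_measure (S K `&` U K) = 0%E.
    apply: (leb_null (F := fun n => if (n < K)%N then S n `&` S K else set0)).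
      move=> t [SKt [n /= nK Snt]]; exists n => //; rewrite nK; split => //.
    move=> n; case: ifPn => nK; last by rewrite measure0.
    have HnK : n <> K by move=> e; move: nK; rewrite e ltnn.
    have := dis n K HnK; rewrite /disjoint01 => <-.
    congr lebesgue_measure; apply/seteqP; split => t.
      by move=> [[It]]; rewrite normr_gt0 => a [_]; rewrite normr_gt0 => b.
    by move=> [It [a b]]; split; split => //; rewrite normr_gt0.
  rewrite UE measureU //; [| exact: mU | exact: (measurableD (mS K) (mU K)) |
     by apply/seteqP; split => t // [Ut [_ /(_ Ut)]]].
  set m := (X in (_ <= _ + X)%E).
  have -> : m = lebesgue_measure (S K).
    have e1 : lebesgue_measure (S K) = (lebesgue_measure (S K `\` U K) + lebesgue_measure (S K `&` U K))%E.
      exact: (measureDI lebesgue_measure (mS K) (mU K)).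
    rewrite nul adde0 in e1; rewrite /m; exact: esym e1.
  rewrite -addn1 natrD mulrDl mul1r EFinD; apply: leeD => //.
  by rewrite -distrib_Ab distribE lee_fin.
have U1 K : (lebesgue_measure (U K) <= 1%:E)%E.
  rewrite -mu_I01; apply: leb_mono => t [n _ []] //.
have := claim (Num.trunc (delta^-1)).+1.
have := truncnS_gt (delta^-1); rewrite -(ltr_pM2r d0) mulVf ?gt_eqF // => h1.
move/le_trans => /(_ _ (U1 _)); rewrite lee_fin => h2.
by move: (lt_le_trans h1 h2); rewrite ltxx.
Qed.

Section Main.
Variable R : realType.
Variables (phi psi : R -> R) (dphi : {measure set (measurableTypeR R) -> \bar R})
  (E : set (R -> R)) (N : (R -> R) -> R).
Hypotheses (Hphi : classG phi) (Hpsi : classG psi)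
  (Hlim : (fun t => psi t / phi t) @ 0^'+ --> 0)
  (Hst : stieltjes_of phi dphi) (HS : symmetric_space E N)
  (Hfund : forall t, I01oc t -> E (\1_(`]0, t[%classic : set R) : R -> R) /\ N (\1_(`]0, t[%classic : set R)) = psi t).

Lemma phi_pos [t] : 0 < t -> t <= 1 -> 0 < phi t.
Proof. by case: Hphi => h _ _ t0 t1; apply: h; rewrite /I01oc /= in_itv /= t0 t1. Qed.
Lemma psi_pos [t] : 0 < t -> t <= 1 -> 0 < psi t.
Proof. by case: Hpsi => h _ _ t0 t1; apply: h; rewrite /I01oc /= in_itv /= t0 t1. Qed.
Lemma phi_mono [s t] : 0 < s -> s <= t -> t <= 1 -> phi s <= phi t.
Proof.
case: Hphi => _ h _ s0 st t1; apply: h => //; rewrite /I01oc /= in_itv /= ?t1 ?s0 ?(le_trans st t1) ?(lt_le_trans s0 st) //.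
Qed.
Lemma psi_mono [s t] : 0 < s -> s <= t -> t <= 1 -> psi s <= psi t.
Proof.
case: Hpsi => _ h _ s0 st t1; apply: h => //; rewrite /I01oc /= in_itv /= ?t1 ?s0 ?(le_trans st t1) ?(lt_le_trans s0 st) //.
Qed.

Lemma eps_delta e : 0 < e -> exists2 d : R, 0 < d & forall t, 0 < t -> t < d -> t <= 1 -> psi t <= e * phi t.
Proof.
move=> e0; have [d d0 Hd] := near_right0 _ _ Hlim _ e0; exists d => // t t0 td t1.
have := Hd t; rewrite t0 td => /(_ isT) /(le_lt_trans (ler_norm _)).
by rewrite ltr_pdivrMr ?phi_pos // => /ltW.
Qed.

Lemma K_exists : exists2 K : R, 0 <= K & forall t, 0 < t -> t <= 1 -> psi t <= K * phi t.
Proof.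
have [d d0 Hd] := eps_delta _ ltr01.
pose m := Num.min d 1.
have m0 : 0 < m by rewrite lt_min d0 ltr01.
have m1 : m <= 1 by rewrite ge_min lexx orbT.
exists (1 + psi 1 / phi m).
  by rewrite addr_ge0 // divr_ge0 // ltW // ?psi_pos ?phi_pos.
have p1 : 0 <= psi 1 by exact/ltW/psi_pos.
have pm : 0 <= phi m by exact/ltW/phi_pos.
move=> t t0 t1; case: (ltP t d) => td.
  apply: (le_trans (Hd t t0 td t1)); rewrite ler_pM2r ?phi_pos // lerDl divr_ge0 //.
have mt : m <= t by rewrite ge_min td.
apply: (le_trans (psi_mono t0 t1 (lexx 1))).
rewrite mulrDl mul1r; apply: (le_trans (y := psi 1 / phi m * phi t)); last first.
  by rewrite lerDr ltW // phi_pos.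
rewrite -mulrA [_^-1 * _]mulrC -[X in X <= _]mulr1 ler_pM2l ?psi_pos // ler_pdivlMr ?phi_pos // mul1r.
exact: phi_mono.
Qed.

Lemma lorentz_ge0 x : (0 <= lorentz_norm dphi x)%E.
Proof. by apply: integral_ge0 => s _; exact: xstar_ge0. Qed.

Lemma lorentz_fin [x] : in_lorentz dphi x -> lorentz_norm dphi x = (fine (lorentz_norm dphi x))%:E.
Proof.
move=> [_ fin]; rewrite fineK // ge0_fin_numE //; exact: lorentz_ge0.
Qed.

Lemma bound x K : in_lorentz dphi x -> 0 <= K ->
  (forall d, 0 < d -> d <= lev x 0 -> psi d <= K * phi d) ->
  E x /\ N x <= K * fine (lorentz_norm dphi x).
Proof.
move=> Hx K0 Hc; have mx := Hx.1; set L := fine (lorentz_norm dphi x).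
have L0 : 0 <= L by rewrite /L fine_ge0 // lorentz_ge0.
have HB h : 0 < h -> forall M, \sum_(j < M) aa psi x h j <= h * psi 1 + K * L.
  move=> h0 [|M].
    by rewrite big_ord0 addr_ge0 // mulr_ge0 // ltW // psi_pos.
  rewrite big_ord_recl; apply: lerD.
    rewrite /aa ler_pM2l // /pt; case: ifPn => d0; last exact/ltW/psi_pos.
    by apply: psi_mono => //; exact: lev_le1.
  have -> : \sum_(i < M) aa psi x h (lift ord0 i) = \sum_(i < M) h * pt psi (lev x (i.+1%:R * h)).
    by apply: eq_bigr => i _; rewrite /aa lift0.
  apply: (le_trans (y := K * \sum_(i < M) h * pt phi (lev x (i.+1%:R * h)))).
    rewrite mulr_sumr; apply: ler_sum => i _; rewrite mulrCA ler_pM2l // /pt.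
    case: ifPn => d0; last by rewrite mulr0.
    apply: Hc => //; apply: lev_mono; exact: mulr_ge0 (ler0n _ _) (ltW h0).
  rewrite ler_wpM2l //; rewrite -lee_fin /L -lorentz_fin //; exact: lorentz_lb.
have [Ex _] := key HS Hfund mx ltr01 (HB 1 ltr01).
split => //; apply/ler_addgt0Pr => e e0.
have h0 : 0 < e / psi 1 by rewrite divr_gt0 // psi_pos.
have [_ ] := key HS Hfund mx h0 (HB _ h0).
by rewrite mulfVK ?gt_eqF ?psi_pos // addrC.
Qed.

Lemma lorentz_pos x : in_lorentz dphi x -> ~ ae_zero01 x -> 0 < fine (lorentz_norm dphi x).
Proof.
move=> Hx nz; have mx := Hx.1.
have [k Hk] : exists k : nat, 0 < lev x (k.+1%:R^-1).
  apply: contrapT => /forallNP H; apply: nz.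
  apply: (leb_null (F := fun k : nat => Ab x (k.+1%:R^-1))).
    move=> t [It xt]; exists (Num.trunc (`|x t|^-1)) => //; split => //.
    have xt0 : 0 < `|x t| by rewrite normr_gt0.
    rewrite -[X in _ < X]invrK ltf_pV2 ?posrE ?invr_gt0 //.
    exact: truncnS_gt.
  move=> k; rewrite -distrib_Ab distribE; congr (_%:E).
  by apply/eqP; rewrite eq_le lev_ge0 andbT leNgt; apply/negP => /(H k).
have hk0 : 0 < k.+1%:R^-1 :> R by rewrite invr_gt0.
have := lorentz_lb Hst x _ 1 hk0; rewrite big_ord1 mul1r.
rewrite (lorentz_fin Hx) lee_fin => h; apply: lt_le_trans h.
by rewrite /pt Hk mulr_gt0 // phi_pos // lev_le1.
Qed.

End Main.

Theorem theorem1 (R : realType) (phi psi : R -> R)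
    (dphi : {measure set (measurableTypeR R) -> \bar R})
    (E : set (R -> R)) (N : (R -> R) -> R) :
  classG phi -> classG psi ->
  (fun t => psi t / phi t) @ 0^'+ --> 0 ->
  stieltjes_of phi dphi ->
  symmetric_space E N ->
  (forall t, I01oc t -> E (\1_(`]0, t[%classic : set R) : R -> R) /\ N (\1_(`]0, t[%classic : set R)) = psi t) ->
  (forall x, in_lorentz dphi x -> E x)
  /\ (exists C : R, 0 <= C /\ forall x, in_lorentz dphi x ->
        ((N x)%:E <= (C%:E * lorentz_norm dphi x)%E)%E)
  /\ inclusion_DSS dphi N.
Proof.
move=> Hphi Hpsi Hlim Hst HS Hfund.
have [K K0 HK] := K_exists _ _ _ Hphi Hpsi Hlim.
have HA : forall x, in_lorentz dphi x -> E x /\ N x <= K * fine (lorentz_norm dphi x).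
  move=> x Hx; apply: (bound _ _ _ _ _ _ Hpsi Hst HS Hfund _ _ Hx K0) => d d0 dl.
  by apply: HK => //; exact: le_trans dl (lev_le1 _ _ _).
split; first by move=> x /HA [].
split.
  exists K; split => // x Hx; have [_ Nx] := HA x Hx.
  by rewrite (lorentz_fin _ _ Hx) -EFinM lee_fin.
move=> [xs [Hin Hnz Hdis [c [c0 Hc]]]].
have c20 : 0 < c / 2 by rewrite divr_gt0.
have [d d0 Hd] := eps_delta _ _ _ Hphi Hlim _ c20.
have [n Hn] := supp_small _ _ _ (fun n => (Hin n).1) Hdis d0.
have [_ Nx] := bound _ _ _ _ _ _ Hpsi Hst HS Hfund _ _ (Hin n) (ltW c20)
  (fun d' d'0 dl => Hd d' d'0 (le_lt_trans dl Hn) (le_trans dl (lev_le1 _ _ _))).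
have cs : closed_span_lorentz dphi xs (xs n).
  split => // e e0.
  exists (fun t => \sum_(i < n.+1) (if (i == n :> nat) then 1 else 0) * xs i t); split.
    by exists n.+1, (fun i => if i == n then 1 else 0).
  rewrite (_ : (fun t => _) = fun _ => 0) ?lorentz0 ?lte_fin //.
  apply/funext => t; rewrite big_ord_recr /= eqxx mul1r big1 ?add0r ?subrr // => i _.
  by rewrite (ltn_eqF (ltn_ord i)) mul0r.
have := Hc _ cs; rewrite (lorentz_fin _ _ (Hin n)) -EFinM lee_fin => cL.
have Lpos := lorentz_pos _ _ _ Hphi Hst _ (Hin n) (Hnz n).
have := le_trans cL Nx; rewrite ler_pM2r // => H.
by move: H; rewrite ler_pdivlMr // -subr_ge0 -[X in X - _]mulr1 -mulrBr pmulr_rge0 // subr_ge0 leNgt ltr1n.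
Qed.
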